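(* Let $\mathcal{A}=\{\mathtt n,\mathtt e,\mathtt w,\mathtt s\}$. Consider the quadruple comb context tree on $\mathcal{A}$, whose contexts are the words $\alpha^k\beta$ with $\alpha,\beta\in\mathcal{A}$, $\alpha\neq\beta$, $k\geq1$, and for each context $c$ let $q_c$ be a probability measure on $\mathcal{A}$ with $q_c(\gamma)>0$ for all $c$ and all $\gamma\in\mathcal{A}$. Let $(U_n)_{n\geq0}$ be the associated variable length Markov chain (VLMC), started from a right-infinite word $U_0$ with $X_{-1}=\mathtt n$, $X_0=\mathtt e$, and for $n\geq0$ let $X_n$ be the first (leftmost) letter of $U_n$, so that $U_n=X_nX_{n-1}\cdots X_0X_{-1}\cdots$. Assume that for all $\alpha\neq\beta$ in $\mathcal{A}$, $\lim_{n\to\infty}\prod_{k=1}^n q_{\alpha^k\beta}(\alpha)=0$. Define the breaking times $B_0=0$, $B_{n+1}=\inf\{k>B_n: X_k\neq X_{k-1}\}$; the sojourn times $T_0=0$, $T_n=B_n-B_{n-1}$ for $n\geq1$; the internal chain $J_0=\mathtt n\mathtt e$ and $J_n=X_{B_{n-1}}X_{B_n}$ for $n\geq1$ (a two-letter word, called a bend); and the bend process $(Z_j)_{j\geq0}$ by $Z_0=\mathtt n\mathtt e$ and, for $j\geq1$, $Z_j=\alpha\beta$ where $\beta=X_j$ and $\alpha$ is the first letter different from $\beta$ in the sequence $X_{j-1},X_{j-2},\dots$. Then $(J_n,T_n)_{n\geq0}$ is a Markov renewal chain on the set of bends $\{\alpha\beta:\alpha,\beta\in\mathcal{A},\alpha\neq\beta\}$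 with semi-Markov kernel \[ p_{\beta\alpha,\alpha\gamma}(k)=\Big(\prod_{j=1}^{k-1}q_{\alpha^j\beta}(\alpha)\Big)\,q_{\alpha^k\beta}(\gamma)\qquad(\beta\neq\alpha,\ \gamma\neq\alpha,\ k\geq1), \] all other kernel entries being $0$; $(Z_j)_{j\geq0}$ is the semi-Markov chain associated with $(J_n,T_n)_{n\geq0}$; and $(J_n,B_n)_{n\geq0}$ is a Markov additive process.
   Context: A VLMC defined by a context tree $\mathcal{T}$ (a saturated tree of finite words on $\mathcal{A}$ with at most countably many infinite branches; contexts are its leaves and infinite branches) and probability measures $(q_c)_c$ indexed by the contexts is the Markov chain $(U_n)$ on right-infinite words over $\mathcal{A}$ with transitions $\mathbb{P}(U_{n+1}=\alpha U_n\mid U_n)=q_{\mathrm{pref}(U_n)}(\alpha)$, where $\mathrm{pref}(w)$ is the unique context that is a prefix of $w$ (for the quadruple comb, $\mathrm{pref}(w)=\alpha^k\beta$ when $w$ begins with exactly $k$ copies of $\alpha$ followed by $\beta\neq\alpha$). Letters are identified with the vectors $\mathtt e=(1,0)$, $\mathtt n=(0,1)$, $\mathtt w=-\mathtt e$, $\mathtt s=-\mathtt n$ of $\mathbb{Z}^2$, and $S_n=\sum_{\ell=1}^nX_\ell$ is the two-dimensional persistent random walk. A Markov chain $(J_n,T_n)_{n\geq0}$ on $E\times\mathbb{N}$ is a Markov renewal chain if $\mathbb{P}(J_{n+1}=b,T_{n+1}=k\mid J_n=a,T_n=j)=\mathbb{P}(J_{n+1}=b,T_{n+1}=k\mid J_n=a)=:p_{a,b}(k)$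 for all $n,a,b,j,k$, with $p_{a,b}(0)=0$; $(p_{a,b}(k))$ is its semi-Markov kernel. If $T_0=0$ and $B_n=\sum_{i=0}^nT_i$, the associated semi-Markov chain is $(Z_j)_{j\geq0}$ with $Z_j=J_n$ for $B_n\leq j<B_{n+1}$. A Markov chain $(J_n,B_n)_{n\geq0}$ on $E\times\mathbb{N}$ is a Markov additive process if $(J_n,B_n-B_{n-1})_n$ is a Markov renewal chain. *)

(* Defs.v *)
From HB Require Import structures.
From mathcomp Require Import all_boot all_order all_algebra.
From mathcomp Require Import all_classical all_reals all_analysis.
Set Implicit Arguments. Unset Strict Implicit. Unset Printing Implicit Defensive.
Import Order.TTheory GRing.Theory Num.Theory.
Local Open Scope classical_set_scope.
Local Open Scope ring_scope.

Definition letter := 'I_4.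
Definition nL : letter := @Ordinal 4 0 isT.
Definition eL : letter := @Ordinal 4 1 isT.
Definition wL : letter := @Ordinal 4 2 isT.
Definition sL : letter := @Ordinal 4 3 isT.
Definition bend := (letter * letter)%type.

(* extended sequence: ext w 0 = X_{-1} = n, ext w (i+1) = X_i *)
Definition ext (w : nat -> letter) (i : nat) : letter :=
  match i with 0 => nL | i'.+1 => w i' end.

(* the finite prefix X_n X_{n-1} ... X_0 X_{-1} of U_n *)
Definition Uprefix (w : nat -> letter) (n : nat) : seq letter :=
  [seq ext w i | i <- rev (iota 0 n.+2)].

(* pref(U_n) = alpha^k beta : alpha = X_n, k = number of leading copies of
   alpha, beta = the letter following them. *)
Definition ctx_k (w : nat -> letter) (n : nat) : nat :=
  find (fun y => y != w n) (Uprefix w n).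
Definition ctx_beta (w : nat -> letter) (n : nat) : letter :=
  nth nL (Uprefix w n) (ctx_k w n).

(* first breaking time strictly after b: inf {k > b | X_k <> X_{k-1}},
   None if this set is empty (infimum = +oo) *)
Definition next_break (w : nat -> letter) (b : nat) : option nat :=
  match pselect (exists k, (b < k)%N && (w k != w k.-1)) with
  | left H => Some (ex_minn H)
  | right _ => None
  end.

Fixpoint brk (w : nat -> letter) (n : nat) : option nat :=
  match n with
  | 0 => Some 0%N
  | n'.+1 => obind (next_break w) (brk w n')
  end.

Definition sojourn (w : nat -> letter) (n : nat) : option nat :=
  match n with
  | 0 => Some 0%N
  | n'.+1 => match brk w n'.+1, brk w n' with
             | Some b', Some b => Some (b' - b)%N
             | _, _ => None
             end
  end.

Definition jump (w : nat -> letter) (n : nat) : option bend :=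
  match n with
  | 0 => Some (nL, eL)
  | n'.+1 => match brk w n', brk w n'.+1 with
             | Some b, Some b' => Some (w b, w b')
             | _, _ => None
             end
  end.

Definition bendproc (w : nat -> letter) (j : nat) : bend :=
  match j with
  | 0 => (nL, eL)
  | j'.+1 => (head nL [seq y <- [seq ext w i | i <- rev (iota 0 j'.+2)]
                      | y != w j'.+1], w j'.+1)
  end.

(* q a b k g stands for q_{a^k b}(g) *)
Definition pkernel {R : realType} (q : letter -> letter -> nat -> letter -> R)
    (x y : bend) (k : nat) : R :=
  let: (b, a) := x in let: (a', g) := y in
  if [&& b != a, a' == a, g != a & (0 < k)%N]
  then (\prod_(1 <= j < k) q a b j a) * q a b k g
  else 0.

Section Processes.
Context {d : measure_display} {Omega : measurableType d} {R : realType}.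
Variable P : probability Omega R.

(* cylinder event {Y_0 = x_0, ..., Y_n = x_n}; None encodes an undefined
   (infinite) value *)
Definition path_ev {S : Type} (Y : nat -> Omega -> option S) (x : nat -> S)
    (n : nat) : set Omega :=
  [set om | forall i, (i <= n)%N -> Y i om = Some (x i)].

(* (time-homogeneous) Markov chain with values in S:
   P(Y_{n+1} = y | Y_0..Y_n) = pi(Y_n, y), stated multiplicatively *)
Definition markov_chain {S : Type} (Y : nat -> Omega -> option S) : Prop :=
  exists pi : S -> S -> R, forall n (x : nat -> S),
    P (path_ev Y x n.+1) = ((pi (x n) (x n.+1))%:E * P (path_ev Y x n))%E.

Definition pairo {S T : Type} (a : option S) (b : option T) : option (S * T) :=
  match a, b with Some a', Some b' => Some (a', b') | _, _ => None end.

(* Markov renewal chain (J_n, T_n) with semi-Markov kernel p: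
   (J,T) is Markov and
   P(J_{n+1}=b, T_{n+1}=k | J_0,T_0,...,J_n=a,T_n=j) = p a b k,
   stated multiplicatively; and p a b 0 = 0. *)
Definition markov_renewal {S : Type} (J : nat -> Omega -> option S)
    (T : nat -> Omega -> option nat) (p : S -> S -> nat -> R) : Prop :=
  (forall a b, p a b 0%N = 0) /\
  forall n (x : nat -> S * nat),
    P (path_ev (fun i om => pairo (J i om) (T i om)) x n.+1)
    = ((p (x n).1 (x n.+1).1 (x n.+1).2)%:E
      * P (path_ev (fun i om => pairo (J i om) (T i om)) x n))%E.

Fixpoint Bsum (T : nat -> Omega -> option nat) (n : nat) (om : Omega) : option nat :=
  match n with
  | 0 => T 0%N om
  | n'.+1 => obind (fun b => omap (addn b) (T n'.+1 om)) (Bsum T n' om)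
  end.

(* Z is the semi-Markov chain associated with (J,T): T_0 = 0 and
   Z_j = J_n for B_n <= j < B_{n+1} (B_{n+1} = None meaning +oo) *)
Definition semi_markov_of {S : Type} (J : nat -> Omega -> option S)
    (T : nat -> Omega -> option nat) (Z : nat -> Omega -> S) : Prop :=
  (forall om, T 0%N om = Some 0%N) /\
  forall om n j b, Bsum T n om = Some b -> (b <= j)%N ->
    (forall b', Bsum T n.+1 om = Some b' -> (j < b')%N) ->
    J n om = Some (Z j om).

Definition increments (B : nat -> Omega -> option nat) (n : nat) (om : Omega)
    : option nat :=
  match n with
  | 0 => B 0%N om
  | n'.+1 => match B n'.+1 om, B n' om with
             | Some b', Some b => Some (b' - b)%N
             | _, _ => None
             end
  end.

Definition markov_additive {S : Type} (J : nat -> Omega -> option S)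
    (B : nat -> Omega -> option nat) : Prop :=
  markov_chain (fun n om => pairo (J n om) (B n om)) /\
  exists p : S -> S -> nat -> R, markov_renewal J (increments B) p.

End Processes.

(* Main.v *)
Require Import Defs.
From HB Require Import structures.
From mathcomp Require Import all_boot all_order all_algebra.
From mathcomp Require Import all_classical all_reals all_analysis.
From mathcomp Require Import zify.
Import Order.TTheory GRing.Theory Num.Theory.
Set Implicit Arguments. Unset Strict Implicit. Unset Printing Implicit Defensive.

Lemma nbSome (w : nat -> letter) M N : next_break w M = Some N ->
  [/\ (M < N)%N, w N != w N.-1 & forall m, (M < m < N)%N -> w m = w m.-1].
Proof.
rewrite /next_break; case: pselect => [H|//] [<-].
case: ex_minnP => m /andP[hM hw] hmin; split => // m' /andP[h1 h2].
apply/eqP; apply/negPn/negP => hne.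
have := hmin m'; rewrite h1 hne => /(_ isT); rewrite leqNgt h2.
by [].
Qed.

Lemma nbNone (w : nat -> letter) M : next_break w M = None ->
  forall k, (M < k)%N -> w k = w k.-1.
Proof.
rewrite /next_break; case: pselect => [//|H] _ k hk.
apply/eqP; apply/negPn/negP => hne; apply: H; exists k; by rewrite hk hne.
Qed.

Lemma nbIntro (w : nat -> letter) M N : (M < N)%N -> w N != w N.-1 ->
  (forall m, (M < m < N)%N -> w m = w m.-1) -> next_break w M = Some N.
Proof.
move=> hMN hN hm; rewrite /next_break; case: pselect => [H|H]; last first.
  by exfalso; apply: H; exists N; rewrite hMN hN.
case: ex_minnP => m /andP[hM hw] hmin; congr Some; apply/eqP.
rewrite eqn_leq hmin ?hMN ?hN //=.
rewrite leqNgt; apply/negP => hlt.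
by move/eqP: hw; apply; apply: hm; rewrite hM hlt.
Qed.

Lemma nb_const (w : nat -> letter) M N : next_break w M = Some N ->
  forall m, (M <= m < N)%N -> w m = w M.
Proof.
move=> /nbSome[hMN _ hc]; elim=> [|m IH] /andP[h1 h2].
  by have -> : M = 0%N by lia.
case: (eqVneq M m.+1) => [->//|hne].
rewrite hc /=; last by lia.
apply: IH; lia.
Qed.

Lemma nbN_const (w : nat -> letter) M : next_break w M = None ->
  forall m, (M <= m)%N -> w m = w M.
Proof.
move=> /nbNone hc; elim=> [|m IH] h1.
  by have -> : M = 0%N by lia.
case: (eqVneq M m.+1) => [->//|hne].
rewrite hc /=; last by lia.
apply: IH; lia.
Qed.

Lemma brkS (w : nat -> letter) n N : brk w n.+1 = Some N ->
  exists M, brk w n = Some M /\ next_break w M = Some N.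
Proof. by rewrite /=; case: (brk w n) => [M|//] /= h; exists M. Qed.

Lemma brkS_lt (w : nat -> letter) n N : brk w n.+1 = Some N ->
  exists M, brk w n = Some M /\ (M < N)%N.
Proof. by move=> /brkS[M [h1 /nbSome[h2 _ _]]]; exists M. Qed.

Lemma brk_le (w : nat -> letter) n N : brk w n = Some N ->
  forall i, (i <= n)%N -> exists M, brk w i = Some M /\ (M <= N)%N.
Proof.
elim: n N => [|n IH] N h i hi.
  have -> : i = 0%N by lia.
  by exists N.
case: (eqVneq i n.+1) => [->|hne]; first by exists N.
have [M [hM hMN]] := brkS_lt h.
have [M' [h1 h2]] := IH M hM i ltac:(lia).
exists M'; split => //; lia.
Qed.

Lemma brk_agree (w w' : nat -> letter) n N : brk w n = Some N ->
  (forall i, (i <= N)%N -> w i = w' i) -> brk w' n = Some N.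
Proof.
elim: n N => [|n IH] N h hag; first by [].
have [M [hM hnb]] := brkS h.
have [hMN hN hc] := nbSome hnb.
rewrite /= (IH M hM); last by move=> i hi; apply: hag; lia.
rewrite /=; apply: nbIntro => //.
  by rewrite -!hag //; lia.
move=> m hm; rewrite -!hag; [exact: hc|lia|lia].
Qed.

Lemma brk_pos (w : nat -> letter) n N : brk w n.+1 = Some N -> (0 < N)%N.
Proof. by move=> /brkS_lt[M [_ h]]; lia. Qed.

Lemma jump_brk (w : nat -> letter) n N : w 0%N = eL -> brk w n = Some N ->
  jump w n = Some (ext w N, w N) /\ ext w N != w N.
Proof.
move=> h0; case: n => [|n] /=.
  by case=> <-; rewrite h0.
case hb: (brk w n) => [M|//] /= hnb.
have [hMN hN hc] := nbSome hnb.
have hcst := nb_const hnb.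
case: N hMN hN hc hcst hnb => [//|N] hMN hN hc hcst hnb /=.
rewrite eq_sym hN; split=> //.
by rewrite hnb (hcst N) //; apply/andP; split; lia.
Qed.

Definition PE n (x : nat -> bend * nat) (w : nat -> letter) :=
  forall i, (i <= n)%N -> pairo (jump w i) (sojourn w i) = Some (x i).

Lemma pairoE {S T : Type} (a : option S) (b : option T) p :
  pairo a b = Some p <-> a = Some p.1 /\ b = Some p.2.
Proof.
case: a => [a|]; case: b => [b|] /=; split => //; try by case.
  by case=> <-.
by case=> -[->] [->]; case: p.
Qed.

Lemma sojS (w : nat -> letter) n k : sojourn w n.+1 = Some k ->
  exists M N, [/\ brk w n = Some M, brk w n.+1 = Some N & k = (N - M)%N].
Proof.
rewrite /sojourn; case: (brk w n.+1) => [N|//]; case: (brk w n) => [M|//].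
by case=> <-; exists M, N.
Qed.

Lemma PE_S n x w : PE n.+1 x w -> PE n x w.
Proof. by move=> h i hi; apply: h; lia. Qed.

Lemma PE_at n x w : PE n x w -> jump w n = Some (x n).1 /\ sojourn w n = Some (x n).2.
Proof. by move=> h; apply/pairoE; apply: h. Qed.

Lemma PE_brk n x w : PE n x w -> exists N, brk w n = Some N.
Proof.
case: n => [|n] h; first by exists 0%N.
have [_ /sojS[M [N [_ hN _]]]] := PE_at h.
by exists N.
Qed.

Lemma PE_det n x (w w' : nat -> letter) : w 0%N = eL -> w' 0%N = eL ->
  PE n x w -> PE n x w' ->
  exists N, [/\ brk w n = Some N, brk w' n = Some N &
             forall i, (i <= N)%N -> w i = w' i].
Proof.
move=> h0 h0'; elim: n => [|n IH] h h'.
  exists 0%N; split => // i hi.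
  have -> : i = 0%N by lia.
  by rewrite h0 h0'.
have [N [hb hb' hag]] := IH (PE_S h) (PE_S h').
have [hj hs] := PE_at h; have [hj' hs'] := PE_at h'.
have [M [N1 [hM hN1 hk]]] := sojS hs.
have [M' [N1' [hM' hN1' hk']]] := sojS hs'.
move: hM hM'; rewrite hb hb' => -[?] [?]; subst M M'.
have [M2 [hM2 hnb]] := brkS hN1; have [M2' [hM2' hnb']] := brkS hN1'.
move: hM2 hM2'; rewrite hb hb' => -[?] [?]; subst M2 M2'.
have [hlt _ _] := nbSome hnb; have [hlt' _ _] := nbSome hnb'.
have eN : N1 = N1' by lia.
subst N1'.
exists N1; split => // i hi.
have [hiN|hNi] := leqP i N; first exact: hag.
move: hj hj'; rewrite /jump hb hN1 hb' hN1' => -[<-] [[e1 e2]].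
case: (ltnP i N1) => hi1.
  rewrite (nb_const hnb) ?(nb_const hnb') ?hag //; apply/andP; split; lia.
by have -> : i = N1 by lia.
Qed.

Lemma PE_agree n x (w w' : nat -> letter) N : w 0%N = eL -> w' 0%N = eL ->
  PE n x w -> brk w n = Some N -> (forall i, (i <= N)%N -> w i = w' i) ->
  PE n x w'.
Proof.
move=> h0 h0' h hb hag.
have hb' : forall i, (i <= n)%N -> exists M, [/\ brk w i = Some M, brk w' i = Some M & (M <= N)%N].
  move=> i hi; have [M [hM hMN]] := brk_le hb hi.
  exists M; split => //; apply: brk_agree hM _ => j hj; apply: hag; lia.
move=> i hi; rewrite -(h i hi).
case: i hi => [|i] hi //.
have [M [h1 h1' hMN]] := hb' i.+1 hi.
have [M' [h2 h2' hMN']] := hb' i ltac:(lia).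
rewrite /jump /sojourn h1 h1' h2 h2' !hag //.
Qed.

Definition kcond (u v : bend) (k : nat) : bool :=
  [&& u.1 != u.2, v.1 == u.2, v.2 != u.2 & (0 < k)%N].

Lemma PE_kcond n x (w : nat -> letter) : w 0%N = eL -> PE n.+1 x w ->
  kcond (x n).1 (x n.+1).1 (x n.+1).2.
Proof.
move=> h0 h.
have [hj hs] := PE_at h.
have [M [N [hM hN hk]]] := sojS hs.
have [hjn _] := PE_at (PE_S h).
have [hjM hne] := jump_brk h0 hM.
move: hjn; rewrite hjM => -[<-] /=.
have [M2 [hM2 hnb]] := brkS hN.
move: hM2; rewrite hM => -[?]; subst M2.
have [hlt hNne _] := nbSome hnb.
move: hj; rewrite /jump hM hN => -[<-] /=.
rewrite /kcond /= hne eqxx /= hk.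
have -> : w M = w N.-1 by rewrite (nb_const hnb) //; apply/andP; split; lia.
rewrite hNne; lia.
Qed.

Definition yext (w0 : nat -> letter) N k (a g : letter) i :=
  if (i <= N)%N then w0 i else if (i < N + k)%N then a else g.

Lemma PE_step n x (w0 : nat -> letter) N : w0 0%N = eL -> PE n x w0 ->
  brk w0 n = Some N -> kcond (x n).1 (x n.+1).1 (x n.+1).2 ->
  forall w : nat -> letter, w 0%N = eL ->
  (PE n.+1 x w <-> forall i, (i <= N + (x n.+1).2)%N ->
      w i = yext w0 N (x n.+1).2 (x n).1.2 (x n.+1).1.2 i).
Proof.
move=> h00 hP0 hb0 /and4P[hba /eqP ha' hga hk] w h0.
have [hj0 hne0] := jump_brk h00 hb0.
have [hjx _] := PE_at hP0.
move: hjx; rewrite hj0 => -[hx].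
split.
- move=> h.
  have [N' [hbw hb0' hag]] := PE_det h0 h00 (PE_S h) hP0.
  move: hb0'; rewrite hb0 => -[?]; subst N'.
  have [hj hs] := PE_at h.
  have [M [N1 [hM hN1 hkk]]] := sojS hs.
  move: hM; rewrite hbw => -[?]; subst M.
  have [M2 [hM2 hnb]] := brkS hN1.
  move: hM2; rewrite hbw => -[?]; subst M2.
  have [hlt _ _] := nbSome hnb.
  move: hj; rewrite /jump hbw hN1 => -[hj].
  move=> i hi; rewrite /yext.
  case: ifP => hiN; first exact: hag.
  case: ifP => hiN2.
    rewrite (nb_const hnb); last by apply/andP; split; lia.
    by rewrite hag // -hx.
  have -> : i = N1 by lia.
  by rewrite -hj.
- move=> hag.
  have hag0 : forall i, (i <= N)%N -> w0 i = w i.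
    by move=> i hi; rewrite hag ?/yext ?hi //; lia.
  have hP : PE n x w := PE_agree h00 h0 hP0 hb0 hag0.
  have hbw : brk w n = Some N := brk_agree hb0 hag0.
  have ea : w0 N = (x n).1.2 by rewrite -hx.
  have hnb : next_break w N = Some (N + (x n.+1).2)%N.
    apply: nbIntro; first by lia.
      rewrite !hag; try lia.
      rewrite /yext.
      case: ifP => h1; first by lia.
      rewrite ltnn; case: ifP => h2.
        have -> : (N + (x n.+1).2).-1 = N by lia.
        by rewrite ea.
      case: ifP => h3; last by lia.
      exact: hga.
    move=> m /andP[hm1 hm2]; rewrite !hag; try lia.
    rewrite /yext.
    case: ifP => h1; first by lia.
    case: ifP => h2; last by lia.
    case: ifP => h3.
      have -> : m.-1 = N by lia.
      by rewrite ea.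
    case: ifP => h4 //; lia.
  move=> i hi.
  case: (eqVneq i n.+1) => [->|hin]; last by apply: hP; lia.
  have hS : brk w n.+1 = Some (N + (x n.+1).2)%N by rewrite /= hbw.
  rewrite /jump /sojourn hS hbw /= addKn.
  rewrite -hag0 // ea hag; last by lia.
  rewrite /yext; case: ifP => h1; first by lia.
  rewrite ltnn -ha'.
  by case: (x n.+1) ha' => -[u v] k /= ->.
Qed.

Local Open Scope classical_set_scope.

Lemma size_Uprefix (y : nat -> letter) p : size (Uprefix y p) = p.+2.
Proof. by rewrite /Uprefix size_map size_rev size_iota. Qed.

Lemma nth_Uprefix (y : nat -> letter) p i : (i < p.+2)%N ->
  nth nL (Uprefix y p) i = ext y (p.+1 - i).
Proof.
move=> hi; rewrite /Uprefix (nth_map 0%N); last by rewrite size_rev size_iota.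
rewrite nth_rev ?size_iota // nth_iota; last by lia.
congr ext; lia.
Qed.

Lemma find_eq {T : Type} (x0 : T) (a : pred T) (s : seq T) j :
  (j < size s)%N -> a (nth x0 s j) -> (forall i, (i < j)%N -> ~~ a (nth x0 s i)) ->
  find a s = j.
Proof.
elim: s j => [|z s IH] [|j] //= hj ha hb.
- by rewrite ha.
- have := hb 0%N isT; rewrite /= => /negbTE ->.
  by congr S; apply: IH => // i hi; apply: (hb i.+1).
Qed.

Lemma head_filter {T : Type} (x0 : T) (a : pred T) (s : seq T) :
  head x0 [seq z <- s | a z] = nth x0 s (find a s).
Proof. by elim: s => [|z s IH] //=; case: (a z). Qed.

Lemma find_Uprefix (y : nat -> letter) p j (a : pred letter) :
  (j <= p)%N -> (forall i, (i <= j)%N -> ~~ a (ext y (p.+1 - i))) ->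
  a (ext y (p - j)) ->
  find a (Uprefix y p) = j.+1 /\ nth nL (Uprefix y p) j.+1 = ext y (p - j).
Proof.
move=> hj hb ha.
have hn : nth nL (Uprefix y p) j.+1 = ext y (p - j).
  by rewrite nth_Uprefix //; lia.
split => //; apply: (@find_eq letter nL a (Uprefix y p) j.+1); first by rewrite size_Uprefix; lia.
  by rewrite hn.
by move=> i hi; rewrite nth_Uprefix; [apply: hb; lia | lia].
Qed.

Lemma ctx_lemma (y : nat -> letter) p j c : (j <= p)%N ->
  (forall i, (i <= j)%N -> ext y (p.+1 - i) = y p) -> ext y (p - j) = c ->
  c != y p -> ctx_k y p = j.+1 /\ ctx_beta y p = c.
Proof.
move=> hj he hc hne.
have [h1 h2] := @find_Uprefix y p j (fun z => z != y p) hj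
  ltac:(by move=> i hi; rewrite /= he ?eqxx) ltac:(by rewrite /= hc).
by rewrite /ctx_beta /ctx_k h1 h2.
Qed.

Definition Cyl {Omega : Type} (X : nat -> Omega -> letter) (y : nat -> letter) M :=
  [set om : Omega | forall i, (i <= M)%N -> X i om = y i].

Definition qstep {R : realType} (q : letter -> letter -> nat -> letter -> R) y m :=
  q (y m) (ctx_beta y m) (ctx_k y m) (y m.+1).

Lemma cyl_iter (d : measure_display) (Omega : measurableType d)
  (R : realType) (P : probability Omega R)
  (q : letter -> letter -> nat -> letter -> R) (X : nat -> Omega -> letter)
  (hlaw : forall n (x : nat -> letter),
     P [set om | forall i, (i <= n.+1)%N -> X i om = x i]
     = ((q (x n) (ctx_beta x n) (ctx_k x n) (x n.+1))%:E
       * P [set om | forall i, (i <= n)%N -> X i om = x i])%E) y N k :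
  P (Cyl X y (N + k)) = ((\prod_(m < k) qstep q y (N + m))%:E * P (Cyl X y N))%E.
Proof.
elim: k => [|k IH]; first by rewrite big_ord0 addn0 mul1e.
rewrite addnS /Cyl hlaw -/(Cyl X y (N + k)) IH big_ord_recr /= EFinM.
by rewrite muleA [X in (X * _)%E]muleC /qstep.
Qed.

Local Open Scope ring_scope.

Lemma pkernel0 {R : realType} (q : letter -> letter -> nat -> letter -> R) u v k :
  ~~ kcond u v k -> pkernel q u v k = 0%R.
Proof. by case: u => b a; case: v => a' g; rewrite /pkernel /kcond /= => /negbTE ->. Qed.

Lemma qstep_y {R : realType} (q : letter -> letter -> nat -> letter -> R)
  (w0 : nat -> letter) N k a g m : ext w0 N != w0 N -> w0 N = a -> (m < k)%N ->
  qstep q (yext w0 N k a g) (N + m) =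
  q a (ext w0 N) m.+1 (yext w0 N k a g (N + m).+1).
Proof.
move=> hne ha hm.
set y := yext w0 N k a g.
have hy : forall i, (N <= i <= N + m)%N -> y i = a.
  move=> i /andP[h1 h2]; rewrite /y /yext.
  case: ifP => h3; first by have -> : i = N by lia.
  by case: ifP => h4 //; lia.
have hext : ext y N = ext w0 N.
  rewrite /y; case: (N) => [|N'] //=.
  by rewrite /yext leqnSn.
have e1 : forall i, (i <= m)%N -> ext y ((N + m).+1 - i) = y (N + m).
  move=> i hi; have -> : ((N + m).+1 - i = (N + m - i).+1)%N by lia.
  rewrite /= (hy (N + m - i)%N); last by apply/andP; split; lia.
  by rewrite hy //; apply/andP; split; lia.
have e2 : ext y (N + m - m) = ext w0 N.
  by have -> : (N + m - m = N)%N by lia.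
have e3 : ext w0 N != y (N + m).
  by rewrite hy -?ha //; apply/andP; split; lia.
have [hk hb] := @ctx_lemma y (N + m) m (ext w0 N) ltac:(lia) e1 e2 e3.
by rewrite /qstep hk hb hy //; apply/andP; split; lia.
Qed.

Lemma prod_kernel {R : realType} (q : letter -> letter -> nat -> letter -> R)
  (w0 : nat -> letter) N (v : bend) k :
  kcond (ext w0 N, w0 N) v k ->
  \prod_(m < k) qstep q (yext w0 N k (w0 N) v.2) (N + m)
  = pkernel q (ext w0 N, w0 N) v k.
Proof.
case: v => a' g /and4P[/= hne /eqP ha hg hk].
rewrite /pkernel hne ha eqxx hg hk /=.
case: k hk => [//|k] _.
rewrite big_ord_recr /= big_add1 /= big_mkord.
rewrite qstep_y // /yext.
have -> : ((N + k).+1 <= N)%N = false by lia.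
rewrite -addnS ltnn; congr (_ * _).
apply: eq_bigr => i _; rewrite -/(yext w0 N k.+1 (w0 N) g) qstep_y //; last by have := ltn_ord i; lia.
rewrite /yext.
have -> : ((N + i).+1 <= N)%N = false by lia.
by have -> : ((N + i).+1 < N + k.+1)%N by have := ltn_ord i; lia.
Qed.

Lemma renewal (d : measure_display) (Omega : measurableType d)
  (R : realType) (P : probability Omega R)
  (q : letter -> letter -> nat -> letter -> R)
  (X : nat -> Omega -> letter)
  (hX0 : forall om, X 0%N om = eL)
  (hlaw : forall n (x : nat -> letter),
     P [set om | forall i, (i <= n.+1)%N -> X i om = x i]
     = ((q (x n) (ctx_beta x n) (ctx_k x n) (x n.+1))%:E
       * P [set om | forall i, (i <= n)%N -> X i om = x i])%E)
  n (x : nat -> bend * nat) :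
  P [set om | PE n.+1 x (fun i => X i om)] =
  ((pkernel q (x n).1 (x n.+1).1 (x n.+1).2)%:E *
    P [set om | PE n x (fun i => X i om)])%E.
Proof.
case: (pselect (exists om0, PE n x (fun i => X i om0))) => [[om0 h0]|hno];
  last first.
  have E0 : [set om | PE n x (fun i => X i om)] = set0.
    by apply/seteqP; split => om //= h; apply: hno; exists om.
  have E1 : [set om | PE n.+1 x (fun i => X i om)] = set0.
    by apply/seteqP; split => om //= h; apply: hno; exists om; apply: PE_S.
  by rewrite E0 E1 measure0 mule0.
set w0 := fun i => X i om0.
have h00 : w0 0%N = eL by apply: hX0.
have [N hb0] := PE_brk h0.
have E_n : [set om | PE n x (fun i => X i om)] = Cyl X w0 N.
  apply/seteqP; split => om /= h.
    have [N' [hb hb' hag]] := PE_det (hX0 om) h00 h h0.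
    by move: hb'; rewrite hb0 => -[?] i hi; subst N'; rewrite hag.
  by apply: (PE_agree h00 (hX0 om) h0 hb0) => i hi; rewrite h.
have [hjn _] := PE_at h0.
have [hj0 hne0] := jump_brk h00 hb0.
move: hjn; rewrite hj0 => -[hx].
case hk: (kcond (x n).1 (x n.+1).1 (x n.+1).2); last first.
  have E1 : [set om | PE n.+1 x (fun i => X i om)] = set0.
    apply/seteqP; split => om //= h.
    by move: hk; rewrite (PE_kcond (hX0 om) h).
  by rewrite E1 measure0 pkernel0 ?hk // mul0e.
set y := yext w0 N (x n.+1).2 (x n).1.2 (x n.+1).1.2.
have E_n1 : [set om | PE n.+1 x (fun i => X i om)] = Cyl X y (N + (x n.+1).2).
  apply/seteqP; split => om /= h.
    by move/(PE_step h00 h0 hb0 hk (hX0 om)): h.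
  by apply/(PE_step h00 h0 hb0 hk (hX0 om)).
have Cy : Cyl X y N = Cyl X w0 N.
  apply/seteqP; split => om /= h i hi; rewrite h //= /y /yext hi //.
rewrite E_n1 E_n (cyl_iter hlaw) Cy; congr (_%:E * _)%E.
rewrite /y -hx; apply: prod_kernel.
by rewrite hx.
Qed.

Lemma Bsum_brk (d : measure_display) (Omega : measurableType d)
  (X : nat -> Omega -> letter) n om :
  Bsum (fun n om => sojourn (fun i => X i om) n) n om = brk (fun i => X i om) n.
Proof.
elim: n => [//|n IH] /=; rewrite IH.
set w := fun i => X i om.
case hb: (brk w n) => [M|] //=.
case hnb: (next_break w M) => [N|] //=.
have [hlt _ _] := nbSome hnb.
congr Some; lia.
Qed.

Lemma semi_path (w : nat -> letter) n b j : w 0%N = eL -> brk w n = Some b ->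
  (b <= j)%N -> (forall b', brk w n.+1 = Some b' -> (j < b')%N) ->
  jump w n = Some (bendproc w j).
Proof.
move=> h0 hb hbj hnext.
have [hj hne] := jump_brk h0 hb.
rewrite hj.
have hc : forall i, (b <= i <= j)%N -> w i = w b.
  move=> i /andP[h1 h2].
  case hnb: (next_break w b) => [b'|].
    have hlt : (j < b')%N by apply: hnext; rewrite /= hb.
    by apply: (nb_const hnb); apply/andP; split; lia.
  by apply: (nbN_const hnb).
case: j hbj hnext hc => [|j'] hbj hnext hc.
  have -> : b = 0%N by lia.
  by rewrite h0.
have hwj : w j'.+1 = w b by apply: hc; apply/andP; split; lia.
rewrite /bendproc -/(Uprefix w j') head_filter hwj.
have -> : find (fun y => y != w b) (Uprefix w j') = (j'.+1 - b)%N.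
  apply: (@find_eq letter nL).
  - by rewrite size_Uprefix; lia.
  - by rewrite nth_Uprefix; [have -> : (j'.+1 - (j'.+1 - b) = b)%N by lia | lia].
  - move=> i hi; rewrite nth_Uprefix; last by lia.
    have -> : (j'.+1 - i = (j' - i).+1)%N by lia.
    by rewrite /= hc ?eqxx //; apply/andP; split; lia.
rewrite nth_Uprefix; last by lia.
by have -> : (j'.+1 - (j'.+1 - b) = b)%N by lia.
Qed.

Definition PEB n (x : nat -> bend * nat) (w : nat -> letter) :=
  forall i, (i <= n)%N -> pairo (jump w i) (brk w i) = Some (x i).

Definition xT (x : nat -> bend * nat) i : bend * nat :=
  ((x i).1, if i is i'.+1 then ((x i).2 - (x i').2)%N else (x i).2).

Fixpoint consB (x : nat -> bend * nat) n : bool :=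
  match n with
  | 0 => (x 0%N).2 == 0%N
  | n'.+1 => consB x n' && ((x n').2 < (x n'.+1).2)%N
  end.

Lemma allS (Q : nat -> Prop) n :
  (forall i, (i <= n.+1)%N -> Q i) <-> (forall i, (i <= n)%N -> Q i) /\ Q n.+1.
Proof.
split=> [h|[h1 h2] i hi]; first by split => [i hi|]; apply: h; lia.
by case: (eqVneq i n.+1) => [->//|hne]; apply: h1; lia.
Qed.

Lemma all0 (Q : nat -> Prop) :
  (forall i, (i <= 0)%N -> Q i) <-> Q 0%N.
Proof. by split=> [h|h [|i]] //; apply: h. Qed.

Lemma PE_xT_brk n x (w : nat -> letter) : consB x n -> PE n (xT x) w ->
  brk w n = Some (x n).2.
Proof.
elim: n => [|n IH].
  by move=> /eqP /= ->.
move=> /andP[hc hlt] h.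
have hb := IH hc (PE_S h).
have [_ hs] := PE_at h.
have [M [N [hM hN hk]]] := sojS hs.
move: hM; rewrite hb => -[?]; subst M.
have [M' [hM' hMN]] := brkS_lt hN.
move: hM'; rewrite hb => -[?]; subst M'.
rewrite hN; congr Some; move: hk => /=; lia.
Qed.

Lemma PEB_iff n x (w : nat -> letter) : PEB n x w <-> consB x n /\ PE n (xT x) w.
Proof.
elim: n => [|n IH].
  rewrite /PEB /PE !all0 /= /xT /=.
  split => [[<-]|[/eqP h1 [h2]]] //=.
  by move=> h3; case: (x 0%N) h2 h3 => u v /= <- <-.
have hPEB : forall P : Prop, (PEB n x w /\ pairo (jump w n.+1) (brk w n.+1) = Some (x n.+1) -> P) -> PEB n.+1 x w -> P.
  move=> Q hQ h; apply: hQ; split; last by apply: h.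
  by move=> i hi; apply: h; lia.
split.
- apply: hPEB; move=> [/IH[hc hP] /pairoE[hj hb]].
  have hbn := PE_xT_brk hc hP.
  have [M [hM hlt]] := brkS_lt hb.
  move: hM; rewrite hbn => -[?]; subst M.
  split; first by rewrite /= hc hlt.
  move=> i hi; case: (eqVneq i n.+1) => [->|hne]; last by apply: hP; lia.
  apply/pairoE; split => //.
  by rewrite /sojourn hb hbn.
- move=> [/andP[hc hlt] hP1].
  have hP : PE n (xT x) w := PE_S hP1.
  have [hj hs] := PE_at hP1.
  have hbn := PE_xT_brk hc hP.
  have hB : PEB n x w by apply/IH.
  move=> i hi; case: (eqVneq i n.+1) => [->|hne]; last by apply: hB; lia.
  apply/pairoE; split => //.
  have [M [N [hM hN hk]]] := sojS hs.
  move: hM; rewrite hbn => -[?]; subst M.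
  have [M' [hM' hMN]] := brkS_lt hN.
  move: hM'; rewrite hbn => -[?]; subst M'.
  rewrite hN; congr Some; move: hk => /=; lia.
Qed.

Unset Implicit Arguments. Set Strict Implicit. Set Printing Implicit Defensive.

Theorem mainTheorem2 (d : measure_display) (Omega : measurableType d)
  (R : realType) (P : probability Omega R)
  (q : letter -> letter -> nat -> letter -> R)
  (hq_pos : forall a b k g, a != b -> (0 < k)%N -> 0 < q a b k g)
  (hq_sum : forall a b k, a != b -> (0 < k)%N -> \sum_(g : letter) q a b k g = 1)
  (h_lim : forall a b, a != b ->
     (\prod_(1 <= k < n.+1) q a b k a) @[n --> \oo] --> 0)
  (X : nat -> Omega -> letter)
  (hX_meas : forall i a, measurable [set om | X i om = a])
  (hX0 : forall om, X 0%N om = eL)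
  (hlaw : forall n (x : nat -> letter),
     P [set om | forall i, (i <= n.+1)%N -> X i om = x i]
     = ((q (x n) (ctx_beta x n) (ctx_k x n) (x n.+1))%:E
       * P [set om | forall i, (i <= n)%N -> X i om = x i])%E) :
  let J := fun n om => jump (fun i => X i om) n in
  let T := fun n om => sojourn (fun i => X i om) n in
  let B := fun n om => brk (fun i => X i om) n in
  let Z := fun j om => bendproc (fun i => X i om) j in
  markov_renewal P J T (pkernel q) /\ semi_markov_of J T Z /\
  markov_additive P J B.
Proof.
move=> J T B Z.
have hk0 : forall a b, pkernel q a b 0%N = 0.
  by move=> a b; apply: pkernel0; rewrite /kcond /= !andbF.
have hren : markov_renewal P J T (pkernel q).
  split => // n x.
  exact: (renewal hX0 hlaw n x).
split => //; split.
  split => // om n j b.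
  rewrite /T !Bsum_brk => hb hbj hnext.
  exact: (semi_path (hX0 om) hb hbj hnext).
split; last first.
  exists (pkernel q).
  have -> : increments B = T.
    apply/funext => n; apply/funext => om.
    by case: n.
  exact: hren.
exists (fun u v => pkernel q u.1 v.1 (v.2 - u.2)%N) => n x.
have hE : forall m, path_ev (fun n om => pairo (J n om) (B n om)) x m
    = [set om | PEB m x (fun i => X i om)] by [].
rewrite !hE.
case hc: (consB x n.+1).
  have hc' : consB x n by move: hc => /= /andP[].
  have -> : [set om | PEB n.+1 x (fun i => X i om)] = [set om | PE n.+1 (xT x) (fun i => X i om)].
    by apply/seteqP; split => om /= h; [have [] := (PEB_iff n.+1 x (fun i => X i om)).1 h | apply/PEB_iff].
  have -> : [set om | PEB n x (fun i => X i om)] = [set om | PE n (xT x) (fun i => X i om)].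
    by apply/seteqP; split => om /= h; [have [] := (PEB_iff n x (fun i => X i om)).1 h | apply/PEB_iff].
  exact: (renewal hX0 hlaw n (xT x)).
have -> : [set om | PEB n.+1 x (fun i => X i om)] = set0.
  apply/seteqP; split => om //= h.
  by have [] := (PEB_iff n.+1 x (fun i => X i om)).1 h; rewrite hc.
rewrite measure0.
case hc': (consB x n).
  have -> : ((x n.+1).2 - (x n).2 = 0)%N.
    by move: hc; rewrite /= hc' /=; lia.
  by rewrite hk0 mul0e.
have -> : [set om | PEB n x (fun i => X i om)] = set0.
  apply/seteqP; split => om //= h.
  by have [] := (PEB_iff n x (fun i => X i om)).1 h; rewrite hc'.
by rewrite measure0 mule0.
Qed.
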